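(* Let $k\ge 3$ be an odd integer. Then $\chi_\rho(S^2_{C_k})\ge 5$.
   Context: $C_k$ is the cycle with vertex set $[k]=\{0,\dots,k-1\}$ and edges $\{i,i+1\}$ (indices mod $k$). For a graph $G$ with vertex set $[k]$, the generalized Sierpi\'nski graph $S^2_G$ has vertex set $[k]^2$, where $ab$ and $cd$ are adjacent iff either $a=c$ and $bd\in E(G)$, or $a\neq c$, $ac\in E(G)$, $b=c$ and $d=a$. A packing $c$-coloring of a graph $X$ is a map $f:V(X)\to\{1,\dots,c\}$ such that any two distinct vertices $u,v$ with $f(u)=f(v)=i$ satisfy $d_X(u,v)>i$; the packing chromatic number $\chi_\rho(X)$ is the least such $c$. *)

(* Defs.v *)
From mathcomp Require Import all_boot.
Set Implicit Arguments. Unset Strict Implicit. Unset Printing Implicit Defensive.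

Definition cycle_adj (k : nat) : rel 'I_k :=
  fun i j => (j == (i.+1 %% k) :> nat) || (i == (j.+1 %% k) :> nat).

(* Generalized Sierpinski graph S^2_G, vertices ab encoded as pairs (a,b). *)
Definition sierpinski2_adj (k : nat) (G : rel 'I_k) : rel ('I_k * 'I_k) :=
  fun u v => let: (a, b) := u in let: (c, d) := v in
    ((a == c) && G b d) || [&& a != c, G a c, b == c & d == a].

Definition dist_le (T : finType) (e : rel T) (u v : T) (i : nat) : Prop :=
  exists p : seq T, [/\ path e u p, last u p = v & size p <= i].

Definition packing_coloring (T : finType) (e : rel T) (c : nat) (f : T -> nat) : Prop :=
  (forall x, 1 <= f x <= c) /\
  (forall u v, u != v -> f u = f v -> ~ dist_le e u v (f u)).

(* Main.v *)
Require Import Defs.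
From mathcomp Require Import all_boot zify.
Set Implicit Arguments. Unset Strict Implicit. Unset Printing Implicit Defensive.

Definition cons_ok (P : seq (seq nat)) (s : seq nat) (c : nat) : bool :=
  let i := size s in
  all (fun p => match p with
     | [::] => true
     | u :: r => let v := last u r in let d := size r in
        if (v == i) && (u < i) then ~~ ((nth 0 s u == c) && (d <= c))
        else if (u == i) && (v < i) then ~~ ((nth 0 s v == c) && (d <= c))
        else true end) P.

Fixpoint search (P : seq (seq nat)) (goal : seq nat -> bool) (fuel : nat) (s : seq nat) : bool :=
  match fuel with
  | 0 => goal s
  | fuel'.+1 => all (fun c => if cons_ok P s c then search P goal fuel' (rcons s c) else true) [:: 1; 2; 3; 4]
  end.

Lemma search_sound P goal n (col : nat -> nat) :
  (forall i, i < n -> 1 <= col i <= 4) ->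
  (forall u r, (u :: r) \in P -> ~ (col u = col (last u r) /\ size r <= col u)) ->
  search P goal n [::] -> goal (mkseq col n).
Proof.
move=> hc hP.
have key : forall fuel m, m + fuel = n -> search P goal fuel (mkseq col m) -> goal (mkseq col n).
  elim=> [|fuel IH] m hm.
    by rewrite addn0 in hm; rewrite hm.
  move=> hs; have hall := allP hs.
  have hm' : m < n by rewrite -hm addnS ltnS leq_addr.
  have hcm : col m \in [:: 1; 2; 3; 4].
    move: (hc m hm'); case: (col m) => [|[|[|[|[|x]]]]] //.
  move: (hall _ hcm).
  have -> : cons_ok P (mkseq col m) (col m).
    apply/allP => -[|u r] // hp /=.
    rewrite size_mkseq.
    have hpc := hP u r hp.
    case: ifP => [/andP[/eqP hv hu]|_].
      apply/negP => /andP[/eqP h1 h2]; apply: hpc.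
      rewrite nth_mkseq // in h1; split; first by rewrite hv h1.
      by rewrite h1.
    case: ifP => [/andP[/eqP hu hv]|_] //.
    apply/negP => /andP[/eqP h1 h2]; apply: hpc.
    rewrite nth_mkseq // in h1; split; first by rewrite {1}hu h1.
    by rewrite hu.
  move=> h; apply: (IH m.+1); [by rewrite addSnnS | by rewrite mkseqS].
by move=> h; apply: (key n 0) => //; rewrite add0n.
Qed.

Lemma map_path_E (T : finType) (e : rel T) (phi : nat -> T) (E : seq (nat * nat)) u r :
  (forall x y, (x, y) \in E -> e (phi x) (phi y)) ->
  path (fun x y : nat => (x, y) \in E) u r -> path e (phi u) (map phi r).
Proof.
move=> hE; elim: r u => [|v r IH] u //= /andP[h1 h2].
by rewrite hE // IH.
Qed.

Lemma apply_check (T : finType) (e : rel T) (f : T -> nat) (phi : nat -> T) (n : nat) (E : seq (nat * nat)) (P : seq (seq nat)) (goal : seq nat -> bool) :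
  (forall x, 1 <= f x <= 4) ->
  (forall u v, u != v -> f u = f v -> ~ dist_le e u v (f u)) ->
  (forall x y, (x, y) \in E -> e (phi x) (phi y)) ->
  (forall u r, (u :: r) \in P -> path (fun x y : nat => (x,y) \in E) u r /\ phi u != phi (last u r)) ->
  search P goal n [::] -> goal (mkseq (fun i => f (phi i)) n).
Proof.
move=> hf hpk hE hP; apply: search_sound => [i _|u r hp [h1 h2]]; first exact: hf.
have [hpath hne] := hP u r hp.
apply: (hpk _ _ hne h1).
exists (map phi r); split.
- exact: map_path_E hpath.
- by rewrite last_map.
- by rewrite size_map.
Qed.


Definition G3_vx : seq nat := [:: 0; 1; 2; 3; 6; 4; 5; 7; 8].
Definition G3_E : seq (nat*nat) := [:: (0,1); (0,2); (1,3); (1,2); (1,0); (2,1); (2,4); (2,0); (3,1); (3,5); (3,6); (5,3); (5,6); (6,3); (6,5); (6,7); (4,2); (4,7); (4,8); (7,6); (7,4); (7,8); (8,4); (8,7)].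
Definition G3_P : seq (seq nat) := [:: [:: 0; 1]; [:: 0; 2]; [:: 0; 1; 3]; [:: 0; 2; 4]; [:: 0; 1; 3; 5]; [:: 0; 1; 3; 6]; [:: 0; 2; 4; 7]; [:: 0; 2; 4; 8]; [:: 1; 2]; [:: 1; 3]; [:: 1; 2; 4]; [:: 1; 3; 5]; [:: 1; 3; 6]; [:: 1; 2; 4; 7]; [:: 1; 2; 4; 8]; [:: 2; 4]; [:: 2; 1; 3]; [:: 2; 4; 7]; [:: 2; 4; 8]; [:: 2; 1; 3; 5]; [:: 2; 1; 3; 6]; [:: 3; 5]; [:: 3; 6]; [:: 3; 6; 7]; [:: 3; 1; 2; 4]; [:: 3; 6; 7; 8]; [:: 4; 7]; [:: 4; 8]; [:: 4; 7; 6]; [:: 4; 7; 6; 5]; [:: 5; 6]; [:: 5; 6; 7]; [:: 5; 6; 7; 8]; [:: 6; 7]; [:: 6; 7; 8]; [:: 7; 8]].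
Definition G5_vx : seq nat := [:: 0; 1; 4; 2; 5; 3; 20; 6; 9; 21; 24; 7; 8; 22; 23; 11; 19; 10; 12; 15; 18; 14; 13; 16; 17].
Definition G5_E : seq (nat*nat) := [:: (0,1); (0,2); (1,4); (1,3); (1,0); (3,1); (3,5); (5,3); (5,2); (2,6); (2,5); (2,0); (4,1); (4,7); (4,8); (7,4); (7,11); (11,7); (11,12); (11,15); (12,11); (12,8); (8,4); (8,12); (17,21); (17,15); (15,11); (15,17); (15,18); (18,22); (18,15); (22,21); (22,24); (22,18); (21,22); (21,17); (19,23); (19,16); (23,24); (23,19); (24,22); (24,20); (24,23); (20,24); (20,16); (16,14); (16,20); (16,19); (6,10); (6,2); (6,9); (9,6); (9,13); (13,9); (13,14); (14,10); (14,16); (14,13); (10,6); (10,14)].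
Definition G5_P : seq (seq nat) := [:: [:: 0; 1]; [:: 0; 2]; [:: 0; 1; 3]; [:: 0; 1; 4]; [:: 0; 2; 5]; [:: 0; 2; 6]; [:: 0; 1; 4; 7]; [:: 0; 1; 4; 8]; [:: 0; 2; 6; 9]; [:: 0; 2; 6; 10]; [:: 0; 1; 4; 7; 11]; [:: 0; 1; 4; 8; 12]; [:: 0; 2; 6; 9; 13]; [:: 0; 2; 6; 10; 14]; [:: 1; 3]; [:: 1; 4]; [:: 1; 0; 2]; [:: 1; 3; 5]; [:: 1; 4; 7]; [:: 1; 4; 8]; [:: 1; 0; 2; 6]; [:: 1; 4; 7; 11]; [:: 1; 4; 8; 12]; [:: 1; 0; 2; 6; 9]; [:: 1; 0; 2; 6; 10]; [:: 1; 4; 7; 11; 15]; [:: 2; 5]; [:: 2; 6]; [:: 2; 5; 3]; [:: 2; 6; 9]; [:: 2; 6; 10]; [:: 2; 0; 1; 4]; [:: 2; 6; 9; 13]; [:: 2; 6; 10; 14]; [:: 2; 0; 1; 4; 7]; [:: 2; 0; 1; 4; 8]; [:: 2; 6; 10; 14; 16]; [:: 3; 5]; [:: 3; 1; 4]; [:: 3; 1; 4; 7]; [:: 3; 1; 4; 8]; [:: 3; 5; 2; 6]; [:: 3; 1; 4; 7; 11]; [:: 3; 1; 4; 8; 12]; [:: 3; 5; 2; 6; 9]; [:: 3; 5; 2; 6; 10]; [:: 4; 7]; [:: 4; 8]; [:: 4; 7; 11]; [:: 4; 8; 12]; [:: 4; 1; 3; 5]; [:: 4; 7; 11; 15]; [::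 4; 1; 0; 2; 6]; [:: 4; 7; 11; 15; 17]; [:: 4; 7; 11; 15; 18]; [:: 5; 2; 6]; [:: 5; 2; 6; 9]; [:: 5; 2; 6; 10]; [:: 5; 3; 1; 4; 7]; [:: 5; 3; 1; 4; 8]; [:: 5; 2; 6; 9; 13]; [:: 5; 2; 6; 10; 14]; [:: 6; 9]; [:: 6; 10]; [:: 6; 9; 13]; [:: 6; 10; 14]; [:: 6; 10; 14; 16]; [:: 6; 10; 14; 16; 19]; [:: 6; 10; 14; 16; 20]; [:: 7; 11]; [:: 7; 4; 8]; [:: 7; 11; 12]; [:: 7; 11; 15]; [:: 7; 11; 15; 17]; [:: 7; 11; 15; 18]; [:: 7; 11; 15; 17; 21]; [:: 7; 11; 15; 18; 22]; [:: 8; 12]; [:: 8; 12; 11]; [:: 8; 12; 11; 15]; [:: 8; 12; 11; 15; 17]; [:: 8; 12; 11; 15; 18]; [:: 9; 13]; [:: 9; 6; 10]; [:: 9; 13; 14]; [:: 9; 13; 14; 16]; [:: 9; 13; 14; 16; 19]; [:: 9; 13; 14; 16; 20]; [:: 10; 14]; [:: 10; 14; 16]; [:: 10; 14; 13]; [:: 10; 14; 16; 19]; [:: 10; 14; 16; 20]; [:: 10; 14; 16; 19; 23]; [:: 10; 14; 16; 20; 24]; [:: 11; 12]; [:: 11; 15]; [:: 11; 15; 17]; [:: 11; 15; 18]; [:: 11; 15; 17; 21]; [:: 11; 15; 18; 22]; [:: 11; 15; 18; 22; 24]; [:: 12; 11; 15]; [:: 12; 11; 15; 17]; [:: 12; 11;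 15; 18]; [:: 12; 11; 15; 17; 21]; [:: 12; 11; 15; 18; 22]; [:: 13; 14]; [:: 13; 14; 16]; [:: 13; 14; 16; 19]; [:: 13; 14; 16; 20]; [:: 13; 14; 16; 19; 23]; [:: 13; 14; 16; 20; 24]; [:: 14; 16]; [:: 14; 16; 19]; [:: 14; 16; 20]; [:: 14; 16; 19; 23]; [:: 14; 16; 20; 24]; [:: 14; 16; 20; 24; 22]; [:: 15; 17]; [:: 15; 18]; [:: 15; 17; 21]; [:: 15; 18; 22]; [:: 15; 18; 22; 24]; [:: 15; 18; 22; 24; 23]; [:: 15; 18; 22; 24; 20]; [:: 16; 19]; [:: 16; 20]; [:: 16; 19; 23]; [:: 16; 20; 24]; [:: 16; 20; 24; 22]; [:: 16; 20; 24; 22; 18]; [:: 16; 20; 24; 22; 21]; [:: 17; 21]; [:: 17; 15; 18]; [:: 17; 21; 22]; [:: 17; 21; 22; 24]; [:: 17; 21; 22; 24; 23]; [:: 17; 21; 22; 24; 20]; [:: 18; 22]; [:: 18; 22; 21]; [:: 18; 22; 24]; [:: 18; 22; 24; 23]; [:: 18; 22; 24; 20]; [:: 18; 22; 24; 23; 19]; [:: 19; 23]; [:: 19; 23; 24]; [:: 19; 16; 20]; [:: 19; 23; 24; 22]; [:: 19; 23; 24; 22; 21]; [:: 20; 24]; [:: 20; 24; 22]; [:: 20; 24; 23]; [:: 20; 24; 22; 21]; [:: 21; 22]; [:: 21; 22; 24]; [:: 21; 22; 24; 23]; [:: 22; 24]; [:: 22; 24; 23]; [:: 23; 24]].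
Definition H_st : seq (nat*nat) := [:: (1,3); (2,3); (1,2); (1,4); (2,2); (2,4); (0,4); (1,1); (1,5); (2,1); (2,5); (3,2); (0,3); (0,5); (1,0); (1,6); (2,0); (2,6); (3,1); (3,3); (0,2); (0,6); (3,0); (3,4); (0,1); (3,5); (0,0); (3,6)].
Definition H_E : seq (nat*nat) := [:: (26,24); (24,20); (24,26); (20,24); (20,12); (12,20); (12,6); (6,2); (6,12); (6,13); (13,6); (13,21); (21,13); (14,7); (7,14); (7,2); (2,0); (2,7); (2,6); (0,2); (0,3); (3,4); (3,0); (3,8); (8,15); (8,3); (15,8); (16,9); (9,16); (9,4); (4,1); (4,9); (4,3); (1,5); (1,4); (5,1); (5,11); (5,10); (10,5); (10,17); (17,10); (22,18); (18,11); (18,22); (11,18); (11,5); (11,19); (19,11); (19,23); (23,19); (23,25); (25,23); (25,27); (27,25)].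
Definition H_P : seq (seq nat) := [:: [:: 0; 2]; [:: 0; 3]; [:: 0; 2; 6]; [:: 0; 2; 7]; [:: 0; 3; 8]; [:: 0; 3; 4]; [:: 0; 2; 6; 12]; [:: 0; 2; 6; 13]; [:: 0; 2; 7; 14]; [:: 0; 3; 8; 15]; [:: 0; 3; 4; 9]; [:: 0; 3; 4; 1]; [:: 0; 2; 6; 12; 20]; [:: 0; 2; 6; 13; 21]; [:: 0; 3; 4; 9; 16]; [:: 0; 3; 4; 1; 5]; [:: 1; 4]; [:: 1; 5]; [:: 1; 4; 3]; [:: 1; 4; 9]; [:: 1; 5; 10]; [:: 1; 5; 11]; [:: 1; 4; 3; 8]; [:: 1; 4; 9; 16]; [:: 1; 5; 10; 17]; [:: 1; 5; 11; 18]; [:: 1; 5; 11; 19]; [:: 1; 4; 3; 0; 2]; [:: 1; 4; 3; 8; 15]; [:: 1; 5; 11; 18; 22]; [:: 1; 5; 11; 19; 23]; [:: 2; 6]; [:: 2; 7]; [:: 2; 6; 12]; [:: 2; 6; 13]; [:: 2; 7; 14]; [:: 2; 0; 3]; [:: 2; 6; 12; 20]; [:: 2; 6; 13; 21]; [:: 2; 0; 3; 8]; [:: 2; 0; 3; 4]; [:: 2; 6; 12; 20; 24]; [:: 2; 0; 3; 8; 15]; [:: 2; 0; 3; 4; 9]; [:: 3; 8]; [:: 3; 4]; [:: 3; 8; 15]; [:: 3; 4; 9]; [:: 3; 0; 2; 6]; [:: 3; 0; 2; 7]; [:: 3; 4; 9; 16]; [:: 3; 4; 1; 5]; [:: 3;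 0; 2; 6; 12]; [:: 3; 0; 2; 6; 13]; [:: 3; 0; 2; 7; 14]; [:: 3; 4; 1; 5; 10]; [:: 3; 4; 1; 5; 11]; [:: 4; 9]; [:: 4; 3; 8]; [:: 4; 9; 16]; [:: 4; 1; 5]; [:: 4; 3; 8; 15]; [:: 4; 1; 5; 10]; [:: 4; 1; 5; 11]; [:: 4; 3; 0; 2; 6]; [:: 4; 3; 0; 2; 7]; [:: 4; 1; 5; 10; 17]; [:: 4; 1; 5; 11; 18]; [:: 4; 1; 5; 11; 19]; [:: 5; 10]; [:: 5; 11]; [:: 5; 10; 17]; [:: 5; 11; 18]; [:: 5; 11; 19]; [:: 5; 1; 4; 9]; [:: 5; 11; 18; 22]; [:: 5; 11; 19; 23]; [:: 5; 1; 4; 3; 8]; [:: 5; 1; 4; 9; 16]; [:: 5; 11; 19; 23; 25]; [:: 6; 12]; [:: 6; 13]; [:: 6; 12; 20]; [:: 6; 13; 21]; [:: 6; 2; 7]; [:: 6; 12; 20; 24]; [:: 6; 2; 7; 14]; [:: 6; 12; 20; 24; 26]; [:: 6; 2; 0; 3; 8]; [:: 7; 14]; [:: 7; 2; 6; 12]; [:: 7; 2; 6; 13]; [:: 7; 2; 6; 12; 20]; [:: 7; 2; 6; 13; 21]; [:: 7; 2; 0; 3; 8]; [:: 8; 15]; [:: 8; 3; 4; 9]; [:: 8; 3; 4; 9; 16]; [:: 9; 16]; [:: 9; 4; 3; 8; 15]; [:: 9; 4; 1; 5; 10]; [:: 9; 4; 1; 5; 11]; [:: 10; 17]; [:: 10;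 5; 11]; [:: 10; 5; 11; 18]; [:: 10; 5; 11; 19]; [:: 10; 5; 11; 18; 22]; [:: 10; 5; 11; 19; 23]; [:: 11; 18]; [:: 11; 19]; [:: 11; 18; 22]; [:: 11; 19; 23]; [:: 11; 5; 10; 17]; [:: 11; 19; 23; 25]; [:: 11; 19; 23; 25; 27]; [:: 12; 20]; [:: 12; 20; 24]; [:: 12; 6; 13]; [:: 12; 20; 24; 26]; [:: 12; 6; 13; 21]; [:: 12; 6; 2; 7; 14]; [:: 13; 21]; [:: 13; 6; 12; 20]; [:: 13; 6; 12; 20; 24]; [:: 13; 6; 2; 7; 14]; [:: 17; 10; 5; 11; 18]; [:: 17; 10; 5; 11; 19]; [:: 18; 22]; [:: 18; 11; 19]; [:: 18; 11; 19; 23]; [:: 18; 11; 19; 23; 25]; [:: 19; 23]; [:: 19; 23; 25]; [:: 19; 11; 18; 22]; [:: 19; 23; 25; 27]; [:: 20; 24]; [:: 20; 24; 26]; [:: 20; 12; 6; 13; 21]; [:: 22; 18; 11; 19; 23]; [:: 23; 25]; [:: 23; 25; 27]; [:: 24; 26]; [:: 25; 27]].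

Definition phiG (k : nat) (kpos : 0 < k) (vx : seq nat) (i : nat) : 'I_k * 'I_k :=
  let w := nth 0 vx i in (Ordinal (ltn_pmod (w %/ k) kpos), Ordinal (ltn_pmod w kpos)).

Definition Pok (T : eqType) (phi : nat -> T) (E : seq (nat * nat)) (P : seq (seq nat)) :=
  all (fun p => if p is u :: r then path (fun x y : nat => (x, y) \in E) u r && (phi u != phi (last u r)) else true) P.

Lemma Pok_sound (T : eqType) (phi : nat -> T) E P : Pok phi E P ->
  forall u r, (u :: r) \in P -> path (fun x y : nat => (x,y) \in E) u r /\ phi u != phi (last u r).
Proof. by move=> /allP h u r /h /andP. Qed.

Lemma small_case (k : nat) (kpos : 0 < k) vx E P n (f : 'I_k * 'I_k -> nat) :
  (forall x, 1 <= f x <= 4) ->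
  (forall u v, u != v -> f u = f v -> ~ dist_le (sierpinski2_adj (@cycle_adj k)) u v (f u)) ->
  all (fun xy => sierpinski2_adj (@cycle_adj k) (phiG kpos vx xy.1) (phiG kpos vx xy.2)) E ->
  Pok (phiG kpos vx) E P ->
  search P (fun _ => false) n [::] -> False.
Proof.
move=> hf hpk /allP hE hP hs.
have hE' : forall x y, (x, y) \in E ->
  sierpinski2_adj (@cycle_adj k) (phiG kpos vx x) (phiG kpos vx y).
  by move=> x y hxy; exact: (hE (x, y) hxy).
by have := apply_check hf hpk hE' (Pok_sound hP) hs.
Qed.

Lemma k3 (f : 'I_3 * 'I_3 -> nat) :
  (forall x, 1 <= f x <= 4) ->
  (forall u v, u != v -> f u = f v -> ~ dist_le (sierpinski2_adj (@cycle_adj 3)) u v (f u)) -> False.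
Proof.
move=> hf hpk; apply: (@small_case 3 erefl G3_vx G3_E G3_P 9 f hf hpk).
- by vm_compute.
- by vm_compute.
- by vm_compute.
Qed.

Lemma k5 (f : 'I_5 * 'I_5 -> nat) :
  (forall x, 1 <= f x <= 4) ->
  (forall u v, u != v -> f u = f v -> ~ dist_le (sierpinski2_adj (@cycle_adj 5)) u v (f u)) -> False.
Proof.
move=> hf hpk; apply: (@small_case 5 erefl G5_vx G5_E G5_P 25 f hf hpk).
- by vm_compute.
- by vm_compute.
- by vm_compute.
Qed.


Lemma cycle_adj_sym k : symmetric (@cycle_adj k).
Proof. by move=> i j; rewrite /cycle_adj orbC. Qed.

Lemma sier_sym k : symmetric (sierpinski2_adj (@cycle_adj k)).
Proof.
move=> [a b] [c d] /=; rewrite cycle_adj_sym eq_sym; congr (_ || _).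
rewrite eq_sym cycle_adj_sym.
by case: (c != a) (cycle_adj c a) (b == c) (d == a) => [] [] [] [] //=; rewrite ?andbF // eq_sym.
Qed.


Definition xs (k a s : nat) := (a + k.-1 + s) %% k.

Definition phiH (k : nat) (kpos : 0 < k) (a : nat) (i : nat) : 'I_k * 'I_k :=
  let st := nth (0,0) H_st i in
  (Ordinal (ltn_pmod (a + k.-1 + st.1) kpos),
   Ordinal (ltn_pmod (xs k a st.1 + st.2 + (k - 3)) kpos)).

Lemma succ_mod k X : X.+1 %% k = (X %% k).+1 %% k.
Proof. by rewrite -[X.+1]addn1 -[(X %% k).+1]addn1 modnDml. Qed.

Lemma in_copy_edge k (kpos : 0 < k) (k3 : 3 <= k) X t (hX : X < k) :
  @cycle_adj k (Ordinal (ltn_pmod (X + t + (k - 3)) kpos)) (Ordinal (ltn_pmod (X + t.+1 + (k - 3)) kpos)).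
Proof.
apply/orP; left => /=.
rewrite -succ_mod.
by have -> : X + t.+1 + (k - 3) = (X + t + (k - 3)).+1 by lia.
Qed.


Lemma bridge_edge k (kpos : 0 < k) (k3 : 3 <= k) a s :
  sierpinski2_adj (@cycle_adj k)
    (Ordinal (ltn_pmod (a + k.-1 + s) kpos), Ordinal (ltn_pmod (xs k a s + 4 + (k - 3)) kpos))
    (Ordinal (ltn_pmod (a + k.-1 + s.+1) kpos), Ordinal (ltn_pmod (xs k a s.+1 + 2 + (k - 3)) kpos)).
Proof.
rewrite /sierpinski2_adj /xs.
set X := (a + k.-1 + s) %% k.
have hX : X < k by rewrite ltn_pmod.
have hX' : (a + k.-1 + s.+1) %% k = X.+1 %% k by rewrite addnS succ_mod.
have e1 : (X + 4 + (k - 3)) %% k = X.+1 %% k.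
  have -> : X + 4 + (k - 3) = X.+1 + k by lia.
  by rewrite modnDr.
have e2 : (X.+1 %% k + 2 + (k - 3)) %% k = X.
  rewrite -addnA modnDml.
  have -> : X.+1 + (2 + (k - 3)) = X + k by lia.
  by rewrite modnDr modn_small.
have hne : X != X.+1 %% k.
  case: (ltnP X.+1 k) => h; first by rewrite modn_small // neq_ltn ltnSn.
  have hk : X.+1 = k by apply/eqP; rewrite eqn_leq h hX.
  by rewrite hk modnn; apply/eqP => h0; move: hk; rewrite h0; lia.
apply/orP; right; apply/and4P; split.
- by rewrite -val_eqE /= hX'.
- by apply/orP; left; rewrite /= hX'.
- by rewrite -val_eqE /= e1 hX'.
- by rewrite -val_eqE /= hX' e2.
Qed.

Definition ek (p q : nat * nat) : bool :=
  [|| (p.1 == q.1) && (q.2 == p.2.+1), (p.1 == q.1) && (p.2 == q.2.+1),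
      [&& p.2 == 4, q.2 == 2 & q.1 == p.1.+1] | [&& p.2 == 2, q.2 == 4 & p.1 == q.1.+1]].

Lemma ek_sound k (kpos : 0 < k) (k3 : 3 <= k) a x y :
  ek (nth (0,0) H_st x) (nth (0,0) H_st y) ->
  sierpinski2_adj (@cycle_adj k) (phiH kpos a x) (phiH kpos a y).
Proof.
rewrite /phiH /ek; case: (nth (0,0) H_st x) => s t; case: (nth (0,0) H_st y) => s' t' hek.
case/or4P: hek => [/andP[/eqP e1 /eqP e2]|/andP[/eqP e1 /eqP e2]|/and3P[/eqP e1 /eqP e2 /eqP e3]|/and3P[/eqP e1 /eqP e2 /eqP e3]];
  simpl in e1, e2; try simpl in e3; subst.
- by apply/orP; left; rewrite eqxx /=; apply: in_copy_edge => //; rewrite ltn_pmod.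
- by apply/orP; left; rewrite eqxx /= cycle_adj_sym; apply: in_copy_edge => //; rewrite ltn_pmod.
- exact: bridge_edge.
- rewrite sier_sym; exact: bridge_edge.
Qed.

Definition inr (p : nat * nat) := (p.1 < 4) && (p.2 < 7).

Lemma phiH_inj k (kpos : 0 < k) (k7 : 7 <= k) a x y :
  inr (nth (0,0) H_st x) -> inr (nth (0,0) H_st y) ->
  nth (0,0) H_st x != nth (0,0) H_st y -> phiH kpos a x != phiH kpos a y.
Proof.
rewrite /phiH /inr; case: (nth (0,0) H_st x) => s t; case: (nth (0,0) H_st y) => s' t' /=.
move=> /andP[hs ht] /andP[hs' ht']; apply: contra => /eqP [] h1 h2.
have es : s = s'.
  have : (a + k.-1 + s == a + k.-1 + s' %[mod k]) by rewrite h1.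
  have ks : s < k by clear -hs ht hs' ht' k7; lia.
  have ks' : s' < k by clear -hs ht hs' ht' k7; lia.
  by rewrite eqn_modDl !modn_small // => /eqP.
subst s'.
have : (xs k a s + (k - 3) + t == xs k a s + (k - 3) + t' %[mod k]) by rewrite (addnAC _ (k - 3) t) (addnAC _ (k - 3) t') h2.
have kt : t < k by clear -hs ht hs' ht' k7; lia.
have kt' : t' < k by clear -hs ht hs' ht' k7; lia.
by rewrite eqn_modDl !modn_small // => /eqP ->.
Qed.
Definition goalH (s : seq nat) := (nth 0 s 0 == 4) != (nth 0 s 1 == 4).

Definition HPok := all (fun p => if p is u :: r then
  [&& path (fun x y : nat => (x, y) \in H_E) u r,
      nth (0,0) H_st u != nth (0,0) H_st (last u r),
      inr (nth (0,0) H_st u) & inr (nth (0,0) H_st (last u r))] else true) H_P.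

Lemma H_facts : [&& HPok, all (fun xy => ek (nth (0,0) H_st xy.1) (nth (0,0) H_st xy.2)) H_E
  & search H_P goalH 28 [::]].
Proof. vm_compute. reflexivity. Qed.

Lemma gen_alt k (kpos : 0 < k) (k7 : 7 <= k) (f : 'I_k * 'I_k -> nat) :
  (forall x, 1 <= f x <= 4) ->
  (forall u v, u != v -> f u = f v -> ~ dist_le (sierpinski2_adj (@cycle_adj k)) u v (f u)) ->
  forall a, (f (phiH kpos a 0) == 4) != (f (phiH kpos a 1) == 4).
Proof.
move=> hf hpk a.
have k3 : 3 <= k by apply: leq_trans k7.
case/and3P: H_facts => /allP hP /allP hE hs.
have hE' : forall x y, (x, y) \in H_E ->
  sierpinski2_adj (@cycle_adj k) (phiH kpos a x) (phiH kpos a y).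
  move=> x y hxy; have h := hE (x, y) hxy. exact: (@ek_sound k kpos k3 a x y h).
have hP' : forall u r, (u :: r) \in H_P -> path (fun x y : nat => (x,y) \in H_E) u r /\ phiH kpos a u != phiH kpos a (last u r).
  move=> u r hu; have := hP _ hu; case/and4P=> h1 h2 h3 h4; split; first exact: h1.
  exact: (@phiH_inj k kpos k7 a u (last u r) h3 h4 h2).
have := @apply_check _ _ f (phiH kpos a) 28 H_E H_P goalH hf hpk hE' hP' hs.
move=> h; rewrite /goalH (@nth_mkseq _ 0 (fun i => f (phiH kpos a i)) 28 0 erefl) (@nth_mkseq _ 0 (fun i => f (phiH kpos a i)) 28 1 erefl) in h; exact: h.
Qed.

Lemma xs_eq k (kpos : 0 < k) a s : xs k a s.+1 = (a + s) %% k.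
Proof.
rewrite /xs; have -> : a + k.-1 + s.+1 = a + s + k by move: kpos; clear; lia.
by rewrite modnDr.
Qed.

Lemma ys_eq k (k3 : 3 <= k) X : (X + 3 + (k - 3)) %% k = X %% k.
Proof. by rewrite -addnA subnKC // modnDr. Qed.

Unset Implicit Arguments.

Theorem corollary1 (k : nat) (hk : 3 <= k) (hodd : odd k) :
  forall (c : nat) (f : 'I_k * 'I_k -> nat),
    packing_coloring (sierpinski2_adj (@cycle_adj k)) c f -> 5 <= c.
Proof.
move=> c f [hc hpk].
rewrite leqNgt; apply/negP => hc4.
have hf : forall x, 1 <= f x <= 4.
  move=> x; case/andP: (hc x) => h1 h2; rewrite h1 /=.
  by apply: leq_trans h2 _; rewrite -ltnS.
have : (k == 3) || (k == 5) || (6 < k).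
  by move: hk hodd; clear; case: k => [|[|[|[|[|[|[|k]]]]]]].
case/orP => [/orP[/eqP ek3|/eqP ek5]|k7].
- by subst k; exact: (k3 hf hpk).
- by subst k; exact: (k5 hf hpk).
have kpos : 0 < k by apply: leq_trans k7.
have k3' : 3 <= k by apply: leq_trans k7.
pose inZ (i : nat) : 'I_k := Ordinal (ltn_pmod i kpos).
pose Pn (i : nat) := f (inZ i, inZ i) == 4.
have alt : forall i, Pn i != Pn i.+1.
  move=> i.
  have := gen_alt kpos k7 hf hpk (i %% k).
  have -> : phiH kpos (i %% k) 0 = (inZ i, inZ i).
    apply/eqP; rewrite xpair_eqE -!val_eqE /=.
    have e : (i %% k + k.-1 + 1) %% k = i %% k.
      by have := xs_eq kpos (i %% k) 0; rewrite /xs addn0 modn_mod.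
    by rewrite e /xs e ys_eq // modn_mod eqxx.
  have -> : phiH kpos (i %% k) 1 = (inZ i.+1, inZ i.+1).
    apply/eqP; rewrite xpair_eqE -!val_eqE /=.
    have e : (i %% k + k.-1 + 2) %% k = i.+1 %% k.
      by have := xs_eq kpos (i %% k) 1; rewrite /xs modnDml addn1.
    by rewrite e /xs e ys_eq // modn_mod eqxx.
  by [].
have par : forall i, Pn i = Pn 0 (+) odd i.
  elim => [|i IH]; first by rewrite addbF.
  have := alt i; rewrite IH /=.
  by case: (Pn 0); case: (odd i); case: (Pn i.+1).
have ek : Pn k = Pn 0.
  by rewrite /Pn; have -> : inZ k = inZ 0 by apply/val_inj; rewrite /= modnn mod0n.
have := par k; rewrite ek hodd.
by case: (Pn 0).
Qed.
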